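(* Let $\mathcal G$ be a CFG and $0<p<1$ with $\Pr_{term}(\mathcal G)\ge1-p$. Then for every $n\in\mathbb N$, $n\ge1$, there exist the following objects, all definable in the first-order theory of $(\mathbb Q,+,\cdot,<)$: - an inductive invariant $\mathsf{Inv}_n$ containing the initial state $\sigma_{init}$; - a function $\mathsf{SI}_n:\mathsf{Inv}_n\to\mathbb R$ with $\mathsf{SI}_n(\sigma_{init})\le p+\frac1n$, $\mathsf{SI}_n\ge0$, and $\mathsf{SI}_n$ a supermartingale function on $\mathsf{Inv}_n$; - a real $\epsilon_n>0$; - a function $U_n:\mathsf{Inv}_n\to\mathbb N$, bounded above by some $H_n$, with $U_n(\gamma)=0$ for every $\gamma$ that satisfies $\mathsf{SI}_n(\gamma)\ge1$ or $\gamma=\sigma_\bot$. Moreover, for every other state $(l,\mathbf x)\in\mathsf{Inv}_n$: - at assignment or nondeterministic states, $U_n(\sigma')<U_n(l,\mathbf x)$ for every successor $\sigma'$; - at probabilistic states, $\sum\mathsf{Pr}(l,l')[\mathbf x]>\epsilon_n$, where the sum ranges over the successors $(l',\mathbf x')$ with $U_n(l',\mathbf x')<U_n(l,\mathbf x)$.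
   Context: A probabilistic control flow graph (CFG) is a tuple $\mathcal G=(L,V,l_{init},\mathbf x_{init},\mapsto,G,\mathsf{Pr},\mathsf{Upd})$. $L$ is a finite set of locations, partitioned into assignment, nondeterministic and probabilistic locations. The variables range over $\mathbb Q$. The initial state is $\sigma_{init}=(l_{init},\mathbf x_{init})$. There are finitely many guarded transitions. At probabilistic locations, each outgoing transition $(l,l')$ carries a probability expression $\mathsf{Pr}(l,l')$ whose values are positive and sum to $1$ over the enabled transitions. Assignment locations have at most one outgoing transition, carrying an update of one variable by an arithmetic expression. A state is a pair $(l,\mathbf x)$. Every state has at least one, and finitely many, successors. Schedulers map finite paths ending in nondeterministic states to successors and induce probability measures $\mathbb P_{\mathfrak s}$ on runs. The terminal state is $\sigma_\bot=(l_{out},\mathbf 0)$. $\Pr_{term}(\mathcal G)=\inf_{\mathfrak s}\mathbb P_{\mathfrak s}[\text{run visits }\sigma_\bot]$. An inductive invariant is a set of states closed under successors. A function $f:\mathsf{Inv}\to\mathbb R$ is a supermartingale function on $\mathsf{Inv}$ if, at every non-terminal $(l,\mathbf x)\in\mathsf{Inv}$: - at assignment or nondeterministic states, $f(l,\mathbf x)\ge f(\sigma')$ for every successor $\sigma'$; - at probabilistic states, $f(l,\mathbf x)\ge\sum\mathsf{Pr}(l,l')[\mathbf x]f(l',\mathbf x')$, summed over successors. Definability: states are encoded as tuples of rationals, with locations encoded as natural numbers. A set of states, or an $\mathbb N$-valued function, is definable if it, respectively its graph, is defined by a first-order formula over $(\mathbb Q,+,\cdot,<)$. A real-valued function $f$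 is definable if the relation $\{(\sigma,q):q\in\mathbb Q,\ q\le f(\sigma)\}$ is so definable. *)

(* Defs.v *)
From HB Require Import structures.
From mathcomp Require Import all_boot all_order all_algebra.
From mathcomp Require Import all_classical all_reals.

Set Implicit Arguments.
Unset Strict Implicit.
Unset Printing Implicit Defensive.

Import Order.TTheory GRing.Theory Num.Theory.
Local Open Scope classical_set_scope.
Local Open Scope ring_scope.

Inductive aexpr (d : nat) : Type :=
| AVar of 'I_d
| AConst of rat
| ANeg of aexpr d
| AAdd of aexpr d & aexpr d
| AMul of aexpr d & aexpr d.

Fixpoint aeval (d : nat) (x : {ffun 'I_d -> rat}) (e : aexpr d) : rat :=
  match e with
  | AVar i => x i
  | AConst q => q
  | ANeg e1 => - aeval x e1
  | AAdd e1 e2 => aeval x e1 + aeval x e2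
  | AMul e1 e2 => aeval x e1 * aeval x e2
  end.

Inductive bexpr (d : nat) : Type :=
| BTrue
| BLt of aexpr d & aexpr d
| BLe of aexpr d & aexpr d
| BEq of aexpr d & aexpr d
| BNot of bexpr d
| BAnd of bexpr d & bexpr d
| BOr of bexpr d & bexpr d.

Fixpoint beval (d : nat) (x : {ffun 'I_d -> rat}) (b : bexpr d) : bool :=
  match b with
  | BTrue => true
  | BLt e1 e2 => aeval x e1 < aeval x e2
  | BLe e1 e2 => aeval x e1 <= aeval x e2
  | BEq e1 e2 => aeval x e1 == aeval x e2
  | BNot b1 => ~~ beval x b1
  | BAnd b1 b2 => beval x b1 && beval x b2
  | BOr b1 b2 => beval x b1 || beval x b2
  end.

Inductive lkind := LAssign | LNondet | LProb.

(* Transitions are the pairs (l,l') with [edge l l'], each carrying a guard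
   [guard l l'] and (for probabilistic l) a probability expression
   [prob l l'].  An assignment location carries the update of its (unique)
   outgoing transition: [Some (v, e)] is  v := e ;  [None] is the trivial
   update (leaving all variables unchanged). *)
Record CFG := MkCFG {
  nL : nat;
  nV : nat;
  kind : 'I_nL -> lkind;
  l_init : 'I_nL;
  x_init : {ffun 'I_nV -> rat};
  l_out : 'I_nL;
  edge : 'I_nL -> 'I_nL -> bool;
  guard : 'I_nL -> 'I_nL -> bexpr nV;
  prob : 'I_nL -> 'I_nL -> aexpr nV;
  upd : 'I_nL -> option ('I_nV * aexpr nV)
}.
Arguments kind : clear implicits.
Arguments edge : clear implicits.
Arguments guard : clear implicits.
Arguments prob : clear implicits.
Arguments upd : clear implicits.
Arguments x_init : clear implicits.
Arguments l_init : clear implicits.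
Arguments l_out : clear implicits.

Definition state (G : CFG) := ('I_(nL G) * {ffun 'I_(nV G) -> rat})%type.

Definition sigma_init (G : CFG) : state G := (l_init G, x_init G).
Definition sigma_bot (G : CFG) : state G := (l_out G, [ffun => 0]).

Definition enabled (G : CFG) (l l' : 'I_(nL G)) (x : {ffun 'I_(nV G) -> rat})
  : bool := edge G l l' && beval x (guard G l l').

Arguments enabled : clear implicits.

Definition post (G : CFG) (l : 'I_(nL G)) (x : {ffun 'I_(nV G) -> rat})
  : {ffun 'I_(nV G) -> rat} :=
  match kind G l with
  | LAssign =>
      match upd G l with
      | Some (v, e) => [ffun j => if j == v then aeval x e else x j]
      | None => x
      end
  | _ => x
  end.

Arguments post : clear implicits.

Definition succ (G : CFG) (s s' : state G) : bool :=
  [exists l' : 'I_(nL G), enabled G s.1 l' s.2 && (s' == (l', post G s.1 s.2))].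

Arguments succ : clear implicits.

Definition wf_CFG (G : CFG) : Prop :=
  [/\ (forall l l1 l2, kind G l = LAssign -> edge G l l1 -> edge G l l2 -> l1 = l2),
      (forall s : state G, exists s' : state G, succ G s s') &
      (forall l x, kind G l = LProb ->
         (forall l', enabled G l l' x -> 0 < aeval x (prob G l l')) /\
         \sum_(l' | enabled G l l' x) aeval x (prob G l l') = 1)].

(* A scheduler maps a finite path, given as (prefix h, last state s), to a
   successor of s whenever s is nondeterministic. *)
Definition scheduler (G : CFG) := seq (state G) -> state G -> state G.

Definition valid_sched (G : CFG) (sch : scheduler G) : Prop :=
  forall h s, kind G s.1 = LNondet -> succ G s (sch h s).

Arguments valid_sched : clear implicits.

(* probability, under [sch], that the run extending the path (h, s) visits
   sigma_bot within k further steps *)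
Fixpoint reachk (R : realType) (G : CFG) (sch : scheduler G) (k : nat)
    (h : seq (state G)) (s : state G) {struct k} : R :=
  if s == sigma_bot G then 1 else
  match k with
  | 0 => 0
  | k'.+1 =>
      match kind G s.1 with
      | LNondet => reachk R sch k' (rcons h s) (sch h s)
      | LAssign => \sum_(l' | enabled G s.1 l' s.2)
                     reachk R sch k' (rcons h s) (l', post G s.1 s.2)
      | LProb => \sum_(l' | enabled G s.1 l' s.2)
                   ratr (aeval s.2 (prob G s.1 l')) *
                   reachk R sch k' (rcons h s) (l', s.2)
      end
  end.

Arguments reachk : clear implicits.

Definition Pr_visit (R : realType) (G : CFG) (sch : scheduler G) : R :=
  sup (range (fun k => reachk R G sch k [::] (sigma_init G))).

Arguments Pr_visit : clear implicits.

Definition Pr_term (R : realType) (G : CFG) : R :=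
  inf [set Pr_visit R G sch | sch in [set sch | valid_sched G sch]].

Definition inductive_invariant (G : CFG) (Inv : set (state G)) : Prop :=
  forall s s', Inv s -> succ G s s' -> Inv s'.

Definition supermartingale (R : realType) (G : CFG) (Inv : set (state G))
    (f : state G -> R) : Prop :=
  forall s, Inv s -> s != sigma_bot G ->
    match kind G s.1 with
    | LProb => \sum_(l' | enabled G s.1 l' s.2)
                 ratr (aeval s.2 (prob G s.1 l')) * f (l', s.2) <= f s
    | _ => forall s', succ G s s' -> f s' <= f s
    end.

Inductive fo_term :=
| TVar of nat
| TAdd of fo_term & fo_term
| TMul of fo_term & fo_term.

Inductive fo_form :=
| FEq of fo_term & fo_term
| FLt of fo_term & fo_term
| FNot of fo_form
| FAnd of fo_form & fo_form
| FOr of fo_form & fo_form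
| FEx of nat & fo_form
| FAll of nat & fo_form.

Fixpoint teval (env : nat -> rat) (t : fo_term) : rat :=
  match t with
  | TVar i => env i
  | TAdd t1 t2 => teval env t1 + teval env t2
  | TMul t1 t2 => teval env t1 * teval env t2
  end.

Definition env_upd (env : nat -> rat) (i : nat) (q : rat) : nat -> rat :=
  fun j => if j == i then q else env j.

Fixpoint holds (env : nat -> rat) (f : fo_form) : Prop :=
  match f with
  | FEq t1 t2 => teval env t1 = teval env t2
  | FLt t1 t2 => teval env t1 < teval env t2
  | FNot f1 => ~ holds env f1
  | FAnd f1 f2 => holds env f1 /\ holds env f2
  | FOr f1 f2 => holds env f1 \/ holds env f2
  | FEx i f1 => exists q : rat, holds (env_upd env i q) f1
  | FAll i f1 => forall q : rat, holds (env_upd env i q) f1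
  end.

(* encoding of a state (l, x) as the tuple (l, x_0, ..., x_{d-1}) placed in
   variables 0..d; remaining variables are set to 0 *)
Definition state_env (G : CFG) (s : state G) : nat -> rat :=
  fun i => match i with
           | 0 => (val s.1)%:R
           | i'.+1 => match (insub i' : option 'I_(nV G)) with
                      | Some j => s.2 j
                      | None => 0
                      end
           end.

(* additionally, the value q in variable d+1 *)
Definition state_env_ext (G : CFG) (s : state G) (q : rat) : nat -> rat :=
  env_upd (state_env s) (nV G).+1 q.

Definition definable_set (G : CFG) (A : set (state G)) : Prop :=
  exists f : fo_form, forall s : state G, holds (state_env s) f <-> A s.

(* N-valued function on the domain D: its graph is definable *)
Definition definable_nfun (G : CFG) (D : set (state G)) (U : state G -> nat)
  : Prop :=
  exists f : fo_form, forall (s : state G) (q : rat),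
    holds (state_env_ext s q) f <-> (D s /\ q = (U s)%:R).

(* real-valued function on the domain D: {(s,q) | q <= F s} is definable *)
Definition definable_rfun (R : realType) (G : CFG) (D : set (state G))
    (F : state G -> R) : Prop :=
  exists f : fo_form, forall (s : state G) (q : rat),
    holds (state_env_ext s q) f <-> (D s /\ ratr q <= F s).

(* a real constant: {q | q <= r} is definable (q in variable 0) *)
Definition definable_real (R : realType) (r : R) : Prop :=
  exists f : fo_form, forall q : rat,
    holds (env_upd (fun _ => 0) 0 q) f <-> ratr q <= r.

(* Main.v *)
Require Import Defs.
From HB Require Import structures.
From mathcomp Require Import all_boot all_order all_algebra.
From mathcomp Require Import all_classical all_reals.
From mathcomp Require Import zify ring lra.
Import Order.TTheory GRing.Theory Num.Theory.
Local Open Scope classical_set_scope.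
Local Open Scope ring_scope.

Definition FO (P : (nat -> rat) -> Prop) :=
  exists f, forall env, holds env f <-> P env.

Lemma FO_ext {P Q : (nat -> rat) -> Prop} :
  FO P -> (forall env, P env <-> Q env) -> FO Q.
Proof. move=> [f Hf] H; exists f => env; split => [/Hf/H|/H/Hf] //. Qed.

Lemma FO_holds f : FO (fun env => holds env f).
Proof. by exists f. Qed.

Lemma FO_and {P Q} : FO P -> FO Q -> FO (fun env => P env /\ Q env).
Proof.
move=> [f Hf] [g Hg]; exists (FAnd f g) => env /=.
by split => -[] /Hf ? /Hg ?.
Qed.

Lemma FO_or {P Q} : FO P -> FO Q -> FO (fun env => P env \/ Q env).
Proof.
move=> [f Hf] [g Hg]; exists (FOr f g) => env /=.
by split => -[/Hf|/Hg]; auto.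
Qed.

Lemma FO_not {P} : FO P -> FO (fun env => ~ P env).
Proof.
move=> [f Hf]; exists (FNot f) => env /=.
by split => H1 H2; apply: H1; apply/Hf.
Qed.

Lemma FO_ex i {P} : FO P -> FO (fun env => exists q, P (env_upd env i q)).
Proof.
move=> [f Hf]; exists (FEx i f) => env /=.
by split => -[q Hq]; exists q; apply/Hf.
Qed.

Lemma FO_True : FO (fun _ => True).
Proof. by exists (FEq (TVar 0) (TVar 0)). Qed.

Lemma FO_False : FO (fun _ => False).
Proof. by exists (FNot (FEq (TVar 0) (TVar 0))) => env /=; split. Qed.

Lemma FO_bool (b : bool) : FO (fun _ => b).
Proof.
case: b.
  by apply: (@FO_ext _ _ FO_True) => env.
by apply: (@FO_ext _ _ FO_False) => env.
Qed.

Lemma FO_exists_fin {T : finType} {P : T -> (nat -> rat) -> Prop} :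
  (forall t, FO (P t)) -> FO (fun env => exists t, P t env).
Proof.
move=> HP.
have H : forall r : seq T, FO (fun env => exists t, t \in r /\ P t env).
  elim=> [|a r IH].
    by apply: (@FO_ext _ _ FO_False) => env; split => // -[t []].
  apply: (@FO_ext _ _ (FO_or (HP a) IH)) => env; split.
    by case=> [H|[t [Ht H]]]; [exists a|exists t]; rewrite inE ?eqxx ?Ht ?orbT.
  case=> t []; rewrite inE => /orP [/eqP->|Ht] H; [by left|right; by exists t].
apply: (@FO_ext _ _ (H (enum T))) => env; split => -[t H1]; exists t => //.
  by case: H1.
by rewrite mem_enum.
Qed.

Lemma FO_forall_fin {T : finType} {P : T -> (nat -> rat) -> Prop} :
  (forall t, FO (P t)) -> FO (fun env => forall t, P t env).
Proof.
move=> HP.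
apply: (@FO_ext _ _ (FO_not (FO_exists_fin (fun t => FO_not (HP t))))) => env.
split.
  move=> H t; apply: contrapT => Ht; apply: H; by exists t.
by move=> H [t Ht]; apply: Ht.
Qed.

Lemma upd_same env i q : env_upd env i q i = q.
Proof. by rewrite /env_upd eqxx. Qed.

Lemma upd_other env i q j : j != i -> env_upd env i q j = env j.
Proof. by rewrite /env_upd => /negbTE ->. Qed.

Definition xof {d} (ix : 'I_d -> nat) (env : nat -> rat) : {ffun 'I_d -> rat} :=
  [ffun i => env (ix i)].

Lemma xof_upd d (ix : 'I_d -> nat) env k q :
  (forall i, (ix i < k)%N) -> xof ix (env_upd env k q) = xof ix env.
Proof.
move=> H; apply/ffunP => i; rewrite !ffunE upd_other //.
by rewrite neq_ltn H.
Qed.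

Definition DefF {d} (F : {ffun 'I_d -> rat} -> rat) :=
  forall (ix : 'I_d -> nat) o N, (forall i, (ix i < N)%N) -> (o < N)%N ->
    FO (fun env => env o = F (xof ix env)).

Definition DefB {d} (B : {ffun 'I_d -> rat} -> bool) :=
  forall (ix : 'I_d -> nat) N, (forall i, (ix i < N)%N) ->
    FO (fun env => B (xof ix env)).

Lemma DefF_ext {d} {F G : {ffun 'I_d -> rat} -> rat} :
  DefF F -> (forall x, F x = G x) -> DefF G.
Proof.
move=> HF E ix o N Hix Ho; apply: (@FO_ext _ _ (HF ix o N Hix Ho)) => env.
by rewrite E.
Qed.

Lemma DefB_ext {d} {F G : {ffun 'I_d -> rat} -> bool} :
  DefB F -> (forall x, F x = G x) -> DefB G.
Proof.
move=> HF E ix N Hix; apply: (@FO_ext _ _ (HF ix N Hix)) => env.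
by rewrite E.
Qed.

Lemma ltW' {a b c : nat} : (a < b)%N -> (b <= c)%N -> (a < c)%N.
Proof. move=> h1 h2; exact: leq_trans h1 h2. Qed.

Lemma DefF_bin {d} {F G : {ffun 'I_d -> rat} -> rat} (op : rat -> rat -> rat)
  (side : rat -> rat -> Prop) (mk : nat -> nat -> nat -> fo_form) :
  (forall env o a b, side (env a) (env b) ->
     (holds env (mk o a b) <-> env o = op (env a) (env b))) ->
  (forall x, side (F x) (G x)) ->
  DefF F -> DefF G -> DefF (fun x => op (F x) (G x)).
Proof.
move=> Hmk Hs HF HG ix o N Hix Ho.
have Hix2 : forall i, (ix i < N.+2)%N by move=> i; apply: ltW' (Hix i) _; lia.
have K1 := HF ix N N.+2 Hix2 (leqnSn _).
have K2 := HG ix N.+1 N.+2 Hix2 (leqnn _).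
apply: (@FO_ext _ _ (FO_ex N (FO_ex N.+1 (FO_and K1 (FO_and K2 (FO_holds (mk o N N.+1))))))).
move=> env.
have E1 : forall a b, xof ix (env_upd (env_upd env N a) N.+1 b) = xof ix env.
  move=> a b; rewrite xof_upd; last by move=> i; apply: ltW' (Hix i) _.
  by rewrite xof_upd.
have EN : forall a b, env_upd (env_upd env N a) N.+1 b N = a.
  by move=> a b; rewrite upd_other ?upd_same // neq_ltn ltnSn.
have EN1 : forall a b, env_upd (env_upd env N a) N.+1 b N.+1 = b.
  by move=> a b; rewrite upd_same.
have Eo : forall a b, env_upd (env_upd env N a) N.+1 b o = env o.
  move=> a b; rewrite !upd_other // neq_ltn ?Ho //.
  by rewrite (ltn_trans Ho).
split.
  case=> a [b]; rewrite E1 EN EN1 => -[Ha [Hb]].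
  move/(Hmk _ o N N.+1); rewrite EN EN1 Eo Ha Hb; apply; exact: Hs.
move=> H; exists (F (xof ix env)), (G (xof ix env)).
rewrite E1 EN EN1; split => //; split => //.
apply/(Hmk _ o N N.+1); rewrite ?EN ?EN1 ?Eo //; exact: Hs.
Qed.

Lemma DefB_bin {d} {F G : {ffun 'I_d -> rat} -> rat} (rel : rat -> rat -> bool)
  (mk : nat -> nat -> fo_form) :
  (forall env a b, holds env (mk a b) <-> rel (env a) (env b)) ->
  DefF F -> DefF G -> DefB (fun x => rel (F x) (G x)).
Proof.
move=> Hmk HF HG ix N Hix.
have Hix2 : forall i, (ix i < N.+2)%N by move=> i; apply: ltW' (Hix i) _; lia.
have K1 := HF ix N N.+2 Hix2 (leqnSn _).
have K2 := HG ix N.+1 N.+2 Hix2 (leqnn _).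
apply: (@FO_ext _ _ (FO_ex N (FO_ex N.+1 (FO_and K1 (FO_and K2 (FO_holds (mk N N.+1))))))).
move=> env.
have E1 : forall a b, xof ix (env_upd (env_upd env N a) N.+1 b) = xof ix env.
  move=> a b; rewrite xof_upd; last by move=> i; apply: ltW' (Hix i) _.
  by rewrite xof_upd.
have EN : forall a b, env_upd (env_upd env N a) N.+1 b N = a.
  by move=> a b; rewrite upd_other ?upd_same // neq_ltn ltnSn.
have EN1 : forall a b, env_upd (env_upd env N a) N.+1 b N.+1 = b.
  by move=> a b; rewrite upd_same.
split.
  case=> a [b]; rewrite E1 EN EN1 => -[Ha [Hb]].
  by move/Hmk; rewrite EN EN1 Ha Hb.
move=> H; exists (F (xof ix env)), (G (xof ix env)).
rewrite E1 EN EN1; split => //; split => //.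
by apply/Hmk; rewrite EN EN1.
Qed.

Lemma DefF_ite {d} {B : {ffun 'I_d -> rat} -> bool} {F G} :
  DefB B -> DefF F -> DefF G -> DefF (fun x => if B x then F x else G x).
Proof.
move=> HB HF HG ix o N Hix Ho.
apply: (@FO_ext _ _ (FO_or (FO_and (HB ix N Hix) (HF ix o N Hix Ho))
                      (FO_and (FO_not (HB ix N Hix)) (HG ix o N Hix Ho)))) => env.
case: (B _) => /=; split.
- by case=> -[].
- by move=> ?; left.
- by case=> -[].
- by move=> ?; right.
Qed.

Lemma DefB_and {d} {B C : {ffun 'I_d -> rat} -> bool} :
  DefB B -> DefB C -> DefB (fun x => B x && C x).
Proof.
move=> HB HC ix N Hix; apply: (@FO_ext _ _ (FO_and (HB ix N Hix) (HC ix N Hix))) => env.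
by split => [[-> ->]|/andP].
Qed.

Lemma DefB_or {d} {B C : {ffun 'I_d -> rat} -> bool} :
  DefB B -> DefB C -> DefB (fun x => B x || C x).
Proof.
move=> HB HC ix N Hix; apply: (@FO_ext _ _ (FO_or (HB ix N Hix) (HC ix N Hix))) => env.
by split => [[->|->]|/orP]; rewrite ?orbT.
Qed.

Lemma DefB_not {d} {B : {ffun 'I_d -> rat} -> bool} :
  DefB B -> DefB (fun x => ~~ B x).
Proof.
move=> HB ix N Hix; apply: (@FO_ext _ _ (FO_not (HB ix N Hix))) => env.
by split => [/negP|/negP].
Qed.

Lemma DefB_const d (b : bool) : DefB (fun _ : {ffun 'I_d -> rat} => b).
Proof. by move=> ix N Hix; apply: FO_bool. Qed.

Lemma DefF_var {d} (i : 'I_d) : DefF (fun x => x i).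
Proof.
move=> ix o N Hix Ho; apply: (@FO_ext _ _ (FO_holds (FEq (TVar o) (TVar (ix i))))).
by move=> env; rewrite ffunE.
Qed.

Lemma DefF_zero d : DefF (fun _ : {ffun 'I_d -> rat} => 0).
Proof.
move=> ix o N Hix Ho.
apply: (@FO_ext _ _ (FO_holds (FEq (TAdd (TVar o) (TVar o)) (TVar o)))) => env /=.
split; last by move=> ->; rewrite addr0.
by move=> H; apply: (addrI (env o)); rewrite addr0.
Qed.

Lemma DefF_one d : DefF (fun _ : {ffun 'I_d -> rat} => 1).
Proof.
move=> ix o N Hix Ho.
apply: (@FO_ext _ _ (FO_holds (FAnd (FEq (TMul (TVar o) (TVar o)) (TVar o))
                             (FNot (FEq (TAdd (TVar o) (TVar o)) (TVar o)))))) => env /=.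
split; last first.
  by move=> ->; rewrite mulr1; split.
case=> H1 H2.
have: env o * (env o - 1) == 0 by rewrite mulrBr mulr1 H1 subrr.
rewrite mulf_eq0 => /orP [/eqP H|]; last by rewrite subr_eq0 => /eqP.
by exfalso; apply: H2; rewrite H addr0.
Qed.

Lemma DefF_add {d} {F G : {ffun 'I_d -> rat} -> rat} :
  DefF F -> DefF G -> DefF (fun x => F x + G x).
Proof.
move=> HF HG; exact: (@DefF_bin _ _ _ (fun a b => a + b) (fun _ _ => True)
          (fun o a b => FEq (TVar o) (TAdd (TVar a) (TVar b)))).
Qed.

Lemma DefF_mul {d} {F G : {ffun 'I_d -> rat} -> rat} :
  DefF F -> DefF G -> DefF (fun x => F x * G x).
Proof.
move=> HF HG; exact: (@DefF_bin _ _ _ (fun a b => a * b) (fun _ _ => True)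
          (fun o a b => FEq (TVar o) (TMul (TVar a) (TVar b)))).
Qed.

Lemma DefF_neg {d} {F : {ffun 'I_d -> rat} -> rat} :
  DefF F -> DefF (fun x => - F x).
Proof.
move=> HF.
apply: (@DefF_bin _ _ F (fun a _ => - a) (fun _ _ => True)
   (fun o a b => FEq (TAdd (TAdd (TVar o) (TVar a)) (TAdd (TVar o) (TVar a)))
                           (TAdd (TVar o) (TVar a)))) => //.
move=> env o a b _ /=; split.
  move=> H; have : env o + env a = 0 by apply: (addrI (env o + env a)); rewrite addr0.
  by move/eqP; rewrite addr_eq0 => /eqP.
by move=> ->; rewrite addNr addr0.
Qed.

Lemma DefF_div {d} {F G : {ffun 'I_d -> rat} -> rat} :
  (forall x, G x != 0) -> DefF F -> DefF G -> DefF (fun x => F x / G x).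
Proof.
move=> HG0.
apply: (@DefF_bin _ _ _ (fun a b => a / b) (fun _ b => b != 0)
          (fun o a b => FEq (TMul (TVar b) (TVar o)) (TVar a))) => //.
move=> env o a b Hb /=; split.
  by move=> <-; rewrite [env b * _]mulrC mulfK.
by move=> ->; rewrite mulrC divfK.
Qed.

Lemma DefF_nat d (n : nat) : DefF (fun _ : {ffun 'I_d -> rat} => n%:R).
Proof.
elim: n => [|n IH]; first exact: DefF_zero.
apply: (DefF_ext (DefF_add IH (DefF_one d))) => x; exact: natr1.
Qed.

Lemma DefF_int d (z : int) : DefF (fun _ : {ffun 'I_d -> rat} => z%:~R).
Proof.
case: z => n.
  apply: (DefF_ext (DefF_nat d n)) => x; by [].
apply: (DefF_ext (DefF_neg (DefF_nat d n.+1))) => x; by rewrite NegzE mulrNz.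
Qed.

Lemma DefF_const d (c : rat) : DefF (fun _ : {ffun 'I_d -> rat} => c).
Proof.
apply: (DefF_ext (DefF_div _ (DefF_int d (numq c)) (DefF_int d (denq c)))).
  by move=> x; rewrite intr_eq0 denq_neq0.
by move=> x; exact: divq_num_den.
Qed.

Lemma DefB_lt {d} {F G : {ffun 'I_d -> rat} -> rat} :
  DefF F -> DefF G -> DefB (fun x => F x < G x).
Proof.
apply: (@DefB_bin _ _ _ (fun a b => a < b) (fun a b => FLt (TVar a) (TVar b))).
by [].
Qed.

Lemma DefB_le {d} {F G : {ffun 'I_d -> rat} -> rat} :
  DefF F -> DefF G -> DefB (fun x => F x <= G x).
Proof.
apply: (@DefB_bin _ _ _ (fun a b => a <= b)
   (fun a b => FOr (FLt (TVar a) (TVar b)) (FEq (TVar a) (TVar b)))).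
move=> env a b /=; rewrite le_eqVlt; split.
  by case=> [->|->]; rewrite ?eqxx ?orbT.
by case/orP => [/eqP|]; auto.
Qed.

Lemma DefB_eq {d} {F G : {ffun 'I_d -> rat} -> rat} :
  DefF F -> DefF G -> DefB (fun x => F x == G x).
Proof.
apply: (@DefB_bin _ _ _ (fun a b => a == b) (fun a b => FEq (TVar a) (TVar b))).
by move=> env a b /=; split => [->|/eqP].
Qed.

Lemma DefF_min {d} {F G : {ffun 'I_d -> rat} -> rat} :
  DefF F -> DefF G -> DefF (fun x => Num.min (F x) (G x)).
Proof.
move=> HF HG; apply: (DefF_ext (DefF_ite (DefB_lt HF HG) HF HG)) => x.
by rewrite minElt.
Qed.

Lemma DefF_aeval {d} (e : aexpr d) : DefF (fun x => aeval x e).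
Proof.
elim: e => [i|q|e IH|e1 IH1 e2 IH2|e1 IH1 e2 IH2] /=.
- exact: DefF_var.
- exact: DefF_const.
- exact: DefF_neg IH.
- exact: DefF_add IH1 IH2.
- exact: DefF_mul IH1 IH2.
Qed.

Lemma DefB_beval {d} (b : bexpr d) : DefB (fun x => beval x b).
Proof.
elim: b => [|e1 e2|e1 e2|e1 e2|b IH|b1 IH1 b2 IH2|b1 IH1 b2 IH2] /=.
- exact: DefB_const.
- exact: DefB_lt (DefF_aeval e1) (DefF_aeval e2).
- exact: DefB_le (DefF_aeval e1) (DefF_aeval e2).
- exact: DefB_eq (DefF_aeval e1) (DefF_aeval e2).
- exact: DefB_not IH.
- exact: DefB_and IH1 IH2.
- exact: DefB_or IH1 IH2.
Qed.

Lemma DefF_subst {d} {F E : {ffun 'I_d -> rat} -> rat} (v : 'I_d) :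
  DefF F -> DefF E ->
  DefF (fun x => F [ffun k => if k == v then E x else x k]).
Proof.
move=> HF HE ix o N Hix Ho.
pose ix' := fun k => if k == v then N else ix k.
have Hix1 : forall i, (ix i < N.+1)%N by move=> i; apply: ltW' (Hix i) _.
have Hix' : forall i, (ix' i < N.+1)%N.
  by move=> i; rewrite /ix'; case: (i == v).
have K1 := HE ix N N.+1 Hix1 (ltnSn _).
have K2 := HF ix' o N.+1 Hix' (ltW' Ho (leqnSn _)).
apply: (@FO_ext _ _ (FO_ex N (FO_and K1 K2))) => env.
have E1 : forall a, xof ix (env_upd env N a) = xof ix env.
  by move=> a; rewrite xof_upd.
have EN : forall a, env_upd env N a N = a by move=> a; rewrite upd_same.
have Eo : forall a, env_upd env N a o = env o.
  by move=> a; rewrite upd_other // neq_ltn Ho.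
have E2 : forall a, xof ix' (env_upd env N a) =
   [ffun k => if k == v then a else xof ix env k].
  move=> a; apply/ffunP => k; rewrite !ffunE /ix'.
  case: (k == v); first by rewrite upd_same.
  by rewrite upd_other // neq_ltn Hix.
split.
  by case=> a; rewrite E1 EN Eo E2 => -[-> ->].
move=> H; exists (E (xof ix env)); rewrite E1 EN Eo E2; split => //.
Qed.

Lemma DefF_sum_seq {d} {T : Type} (r : seq T)
  (P : T -> {ffun 'I_d -> rat} -> bool) (F : T -> {ffun 'I_d -> rat} -> rat) :
  (forall t, DefB (P t)) -> (forall t, DefF (F t)) ->
  DefF (fun x => \sum_(t <- r | P t x) F t x).
Proof.
move=> HP HF; elim: r => [|a r IH].
  by apply: (DefF_ext (DefF_zero d)) => x; rewrite big_nil.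
apply: (DefF_ext (DefF_ite (HP a) (DefF_add (HF a) IH) IH)) => x.
by rewrite big_cons.
Qed.

Lemma DefF_bigmin_seq {d} {T : Type} (r : seq T)
  (P : T -> {ffun 'I_d -> rat} -> bool) (F : T -> {ffun 'I_d -> rat} -> rat) :
  (forall t, DefB (P t)) -> (forall t, DefF (F t)) ->
  DefF (fun x => \big[Num.min/1]_(t <- r | P t x) F t x).
Proof.
move=> HP HF; elim: r => [|a r IH].
  by apply: (DefF_ext (DefF_one d)) => x; rewrite big_nil.
apply: (DefF_ext (DefF_ite (HP a) (DefF_min (HF a) IH) IH)) => x.
by rewrite big_cons.
Qed.

Lemma DefF_find {d} (r : seq nat) (P : nat -> {ffun 'I_d -> rat} -> bool) :
  (forall j, DefB (P j)) -> DefF (fun x => (find (fun j => P j x) r)%:R).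
Proof.
move=> HP; elim: r => [|a r IH].
  by apply: (DefF_ext (DefF_zero d)) => x.
apply: (DefF_ext (DefF_ite (HP a) (DefF_zero d) (DefF_add IH (DefF_one d)))) => x /=.
by case: (P a x) => //; rewrite natr1.
Qed.

Lemma DefB_ffun_eq {d} (c : {ffun 'I_d -> rat}) : DefB (fun x => x == c).
Proof.
move=> ix N Hix.
have K : forall i : 'I_d, FO (fun env => xof ix env i == c i).
  move=> i; have H := DefB_eq (DefF_var i) (DefF_const d (c i)).
  exact: (H ix N Hix).
refine (FO_ext (FO_forall_fin K) _).
move=> env; split.
  by move=> H; apply/eqP/ffunP => i; apply/eqP; exact: H.
by move/eqP => -> i.
Qed.

Lemma FO_le_F {d} {F : {ffun 'I_d -> rat} -> rat} :
  DefF F -> forall ix o N, (forall i, (ix i < N)%N) -> (o < N)%N ->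
  FO (fun env => env o <= F (xof ix env)).
Proof.
move=> HF ix o N Hix Ho.
have Hix1 : forall i, (ix i < N.+1)%N by move=> i; apply: ltW' (Hix i) _.
have K1 := HF ix N N.+1 Hix1 (ltnSn _).
apply: (@FO_ext _ _ (FO_ex N (FO_and K1
   (FO_holds (FOr (FLt (TVar o) (TVar N)) (FEq (TVar o) (TVar N))))))) => env /=.
have E1 : forall a, xof ix (env_upd env N a) = xof ix env.
  by move=> a; rewrite xof_upd.
have EN : forall a, env_upd env N a N = a by move=> a; rewrite upd_same.
have Eo : forall a, env_upd env N a o = env o.
  by move=> a; rewrite upd_other // neq_ltn Ho.
split.
  case=> a; rewrite E1 EN Eo => -[-> [H|->]] //; exact: ltW.
move=> H; exists (F (xof ix env)); rewrite E1 EN Eo; split => //.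
by move: H; rewrite le_eqVlt => /orP [/eqP ->|]; auto.
Qed.

Lemma FO_var_const (c : rat) (o : nat) : FO (fun env => env o = c).
Proof.
have := @DefF_const 0 c (fun i => 0%N) o o.+1 (fun i => ltn0Sn _) (ltnSn _).
by [].
Qed.

(* finite-horizon minimal reachability values                          *)

Fixpoint vv (G : CFG) (j : nat) (s : state G) {struct j} : rat :=
  if s == sigma_bot G then 1 else
  match j with
  | 0 => 0
  | j'.+1 =>
    match kind G s.1 with
    | LNondet => \big[Num.min/1]_(l' | enabled G s.1 l' s.2)
                   vv G j' (l', post G s.1 s.2)
    | LAssign => \sum_(l' | enabled G s.1 l' s.2) vv G j' (l', post G s.1 s.2)
    | LProb => \sum_(l' | enabled G s.1 l' s.2)
                 aeval s.2 (prob G s.1 l') * vv G j' (l', post G s.1 s.2)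
    end
  end.

Lemma vv0 G s : vv G 0 s = if s == sigma_bot G then 1 else 0.
Proof. by []. Qed.

Lemma vvS G j s : vv G j.+1 s = if s == sigma_bot G then 1 else
    match kind G s.1 with
    | LNondet => \big[Num.min/1]_(l' | enabled G s.1 l' s.2)
                   vv G j (l', post G s.1 s.2)
    | LAssign => \sum_(l' | enabled G s.1 l' s.2) vv G j (l', post G s.1 s.2)
    | LProb => \sum_(l' | enabled G s.1 l' s.2)
                 aeval s.2 (prob G s.1 l') * vv G j (l', post G s.1 s.2)
    end.
Proof. by []. Qed.

Lemma DefB_bot G (l : 'I_(nL G)) : DefB (fun x => (l, x) == sigma_bot G).
Proof.
apply: (DefB_ext (DefB_and (DefB_const _ (l == l_out G)) (DefB_ffun_eq [ffun => 0]))).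
by move=> x; rewrite /sigma_bot xpair_eqE.
Qed.

Lemma DefB_enabled G (l l' : 'I_(nL G)) : DefB (fun x => enabled G l l' x).
Proof.
exact: (DefB_and (DefB_const _ (edge G l l')) (DefB_beval (guard G l l'))).
Qed.

Lemma DefF_post G (l : 'I_(nL G)) {H : {ffun 'I_(nV G) -> rat} -> rat} :
  DefF H -> DefF (fun x => H (post G l x)).
Proof.
move=> HH; rewrite /post; case: (kind G l) => //.
case: (upd G l) => [[v e]|] //.
exact: (DefF_subst v HH (DefF_aeval e)).
Qed.

Lemma DefF_vv G j (l : 'I_(nL G)) : DefF (fun x => vv G j (l, x)).
Proof.
elim: j l => [|j IH] l.
  exact: (DefF_ite (DefB_bot G l) (DefF_one _) (DefF_zero _)).
have K : DefF (fun x => match kind G l with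
    | LNondet => \big[Num.min/1]_(l' | enabled G l l' x) vv G j (l', post G l x)
    | LAssign => \sum_(l' | enabled G l l' x) vv G j (l', post G l x)
    | LProb => \sum_(l' | enabled G l l' x)
                 aeval x (prob G l l') * vv G j (l', post G l x)
    end).
  case: (kind G l).
  - exact: (DefF_sum_seq (index_enum _) (fun t x => enabled G l t x)
              (fun t x => vv G j (t, post G l x)) (fun t => DefB_enabled G l t)
              (fun t => DefF_post G l (IH t))).
  - exact: (DefF_bigmin_seq (index_enum _) (fun t x => enabled G l t x)
              (fun t x => vv G j (t, post G l x)) (fun t => DefB_enabled G l t)
              (fun t => DefF_post G l (IH t))).
  - exact: (DefF_sum_seq (index_enum _) (fun t x => enabled G l t x)
              (fun t x => aeval x (prob G l t) * vv G j (t, post G l x))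
              (fun t => DefB_enabled G l t)
              (fun t => DefF_mul (DefF_aeval _) (DefF_post G l (IH t)))).
exact: (DefF_ite (DefB_bot G l) (DefF_one _) K).
Qed.

Lemma assign_sum {G} (wf : wf_CFG G) (l : 'I_(nL G)) x :
  kind G l = LAssign -> exists l0, [/\ enabled G l l0 x,
   (forall l', enabled G l l' x -> l' = l0) &
   forall (V : zmodType) (F : 'I_(nL G) -> V),
     \sum_(l' | enabled G l l' x) F l' = F l0].
Proof.
case: wf => Hu Hs Hp Hk.
have [s' /existsP [l0 /andP [Hen _]]] := Hs (l, x).
have Hun : forall l', enabled G l l' x -> l' = l0.
  move=> l' He; apply: (Hu l) => //; [exact: (andP He).1 | exact: (andP Hen).1].
exists l0; split => // V F; apply: big_pred1 => l' /=.
by apply/idP/eqP => [/Hun|->//].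
Qed.

Lemma vv_bnd {G} (wf : wf_CFG G) j s : 0 <= vv G j s <= 1.
Proof.
elim: j s => [|j IH] [l x].
  by rewrite vv0; case: ifP => _; rewrite ?ler01 ?lexx.
rewrite vvS; case: ifP => _; first by rewrite ler01 lexx.
case Hk: (kind G l).
- by have [l0 [Hen _ ->]] := assign_sum wf l x Hk; exact: IH.
- apply: (big_ind (fun y => 0 <= y <= 1)); first by rewrite ler01 lexx.
    by move=> a b Ha Hb; rewrite minElt; case: ifP.
  by move=> i _; exact: IH.
- case: wf => _ _ Hp; have [Hpos Hsum] := Hp l x Hk.
  apply/andP; split.
    apply: sumr_ge0 => i Hi; rewrite mulr_ge0 //; first exact: ltW (Hpos i Hi).
    by case/andP: (IH (i, post G l x)).
  rewrite -Hsum; apply: ler_sum => i Hi.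
  rewrite -[leRHS]mulr1 ler_wpM2l //; first exact: ltW (Hpos i Hi).
  by case/andP: (IH (i, post G l x)).
Qed.

Lemma vv_ge0 {G} (wf : wf_CFG G) j s : 0 <= vv G j s.
Proof. by case/andP: (vv_bnd wf j s). Qed.

Lemma vv_le1 {G} (wf : wf_CFG G) j s : vv G j s <= 1.
Proof. by case/andP: (vv_bnd wf j s). Qed.

Lemma vv_mono {G} (wf : wf_CFG G) j s : vv G j s <= vv G j.+1 s.
Proof.
elim: j s => [|j IH] [l x].
  case Hb: ((l, x) == sigma_bot G); first by rewrite vv0 vvS Hb.
  by rewrite vv0 Hb; exact: vv_ge0.
rewrite [vv G j.+2 _]vvS [vv G j.+1 _]vvS; case: ifP => // _.
case Hk: (kind G (l, x).1).
- by have [l0 [_ _ HE]] := assign_sum wf l x Hk; rewrite !HE; exact: IH.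
- apply: le_bigmin; first exact: bigmin_le_id.
  move=> i Hi; apply: (le_trans _ (IH _)); exact: (@bigmin_le_cond _ _ _ 1 i (fun l0 => enabled G l l0 x) (fun l0 => vv G j (l0, post G l x)) Hi).
- case: wf => _ _ Hp; have [Hpos Hsum] := Hp l x Hk.
  apply: ler_sum => i Hi; rewrite ler_wpM2l //; first exact: ltW (Hpos i Hi).
Qed.

Lemma vv_le {G} (wf : wf_CFG G) i k s : vv G i s <= vv G (i + k) s.
Proof.
elim: k => [|k IH]; first by rewrite addn0.
by rewrite addnS; apply: le_trans IH (vv_mono wf _ _).
Qed.

Lemma vv_leq {G} (wf : wf_CFG G) i j s : (i <= j)%N -> vv G i s <= vv G j s.
Proof. by move/subnKC <-; exact: vv_le. Qed.

(* the supermartingale and the ranking function                         *)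

Definition si G K (dl : rat) (s : state G) : rat := Num.min 1 (1 - vv G K s + dl).
Definition tt K (dl : rat) (j : nat) : rat := dl * j.+1%:R / K.+1%:R.
Definition uu G K dl (s : state G) : nat :=
  if (s == sigma_bot G) || (1 <= si G K dl s) then 0%N
  else find (fun j => tt K dl j < vv G j s) (iota 0 K.+1).

Lemma post_nonassign G (l : 'I_(nL G)) x : kind G l <> LAssign -> post G l x = x.
Proof. by rewrite /post; case: (kind G l). Qed.

Lemma si_ge0 {G} (wf : wf_CFG G) K dl s : 0 < dl -> 0 <= si G K dl s.
Proof.
move=> Hd; rewrite /si le_min ler01 /=.
have := vv_le1 wf K s; lra.
Qed.

Lemma tt_ge0 K dl j : 0 < dl -> 0 <= tt K dl j.
Proof. by move=> Hd; rewrite /tt mulr_ge0 // ?invr_ge0 // mulr_ge0 // ltW. Qed.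

Lemma ttS K dl j : tt K dl j.+1 = tt K dl j + dl / K.+1%:R.
Proof. by rewrite /tt -natr1 mulrDr mulr1 mulrDl. Qed.

Lemma ttK K dl : tt K dl K = dl.
Proof. by rewrite /tt mulfK // pnatr_eq0. Qed.

Lemma tt_lt K dl j : 0 < dl -> tt K dl j < tt K dl j.+1.
Proof.
by move=> Hd; rewrite ttS -{1}[tt K dl j]addr0 ltrD2l divr_gt0 // ltr0Sn.
Qed.

Lemma uu_le G K dl s : (uu G K dl s <= K.+1)%N.
Proof.
rewrite /uu; case: ifP => // _.
by have := find_size (fun j => tt K dl j < vv G j s) (iota 0 K.+1); rewrite size_iota.
Qed.

Lemma uu_zero G K dl s : (1 <= si G K dl s) \/ s = sigma_bot G -> uu G K dl s = 0%N.
Proof. by rewrite /uu => -[->|->]; rewrite ?eqxx ?orbT. Qed.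

Lemma uu_small G K dl (s : state G) j : (j <= K)%N -> tt K dl j < vv G j s ->
  (uu G K dl s <= j)%N.
Proof.
move=> HjK Hj; rewrite /uu; case: ifP => // _.
rewrite leqNgt; apply/negP => Hlt.
have := before_find 0%N Hlt; rewrite nth_iota ?ltnS // add0n Hj //.
Qed.

Lemma uu_pos {G} (wf : wf_CFG G) K dl (s : state G) : 0 < dl ->
  s != sigma_bot G -> si G K dl s < 1 ->
  exists j, [/\ uu G K dl s = j.+1, (j < K)%N & tt K dl j.+1 < vv G j.+1 s].
Proof.
move=> Hd Hnb Hsi.
have HK : tt K dl K < vv G K s.
  move: Hsi; rewrite ttK /si gt_min ltxx /=; lra.
have Hhas : has (fun j => tt K dl j < vv G j s) (iota 0 K.+1).
  by apply/hasP; exists K => //; rewrite mem_iota add0n ltnS leqnn.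
have Hf := nth_find 0%N Hhas.
have Hlt : (find (fun j => (tt K dl j < vv G j s)%R) (iota 0 K.+1) < K.+1)%N.
  by move: Hhas; rewrite has_find size_iota.
rewrite nth_iota // add0n in Hf.
have Hu : uu G K dl s = find (fun j => tt K dl j < vv G j s) (iota 0 K.+1).
  by rewrite /uu (negbTE Hnb) /= leNgt Hsi.
move: Hlt Hf; rewrite -Hu; case: (uu G K dl s) => [|j] Hlt Hf.
  by move: Hf; rewrite vv0 (negbTE Hnb) ltNge tt_ge0.
by exists j; split.
Qed.

Lemma ratr_sumM (R : realType) (I : finType) (P : pred I) (a b : I -> rat) :
  \sum_(i | P i) (ratr (a i) : R) * ratr (b i) = ratr (\sum_(i | P i) a i * b i).
Proof. by rewrite rmorph_sum; apply: eq_bigr => i _; rewrite rmorphM. Qed.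

Lemma si_super (R : realType) {G} (wf : wf_CFG G) K dl : 0 < dl ->
  supermartingale setT (fun s => (ratr (si G K dl s) : R)).
Proof.
move=> Hd [l x] _ Hnb.
have E := vvS G K (l, x); rewrite (negbTE Hnb) in E.
have Hm := vv_mono wf K (l, x).
case Hk: (kind G (l, x).1); rewrite Hk in E.
- move=> s' /existsP [l' /andP [He /eqP ->]].
  have [l0 [Hen Hun HE]] := assign_sum wf l x Hk.
  rewrite HE in E; rewrite ler_rat /si; apply: le_min2 => //.
  have := Hun l' He => /= ->; rewrite E in Hm; lra.
- move=> s' /existsP [l' /andP [He /eqP ->]].
  rewrite ler_rat /si; apply: le_min2 => //.
  have := @bigmin_le_cond _ _ _ 1 l' (fun l0 => enabled G l l0 x)
     (fun l0 => vv G K (l0, post G l x)) He.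
  rewrite -E => H1; have := le_trans Hm H1 => /=; lra.
- case: wf => _ _ Hp; have [Hpos Hsum] := Hp l x Hk.
  rewrite ratr_sumM ler_rat.
  change (post G (l, x).1 (l, x).2) with (post G l x) in E.
  rewrite post_nonassign ?Hk // in E.
  rewrite {2}/si le_min; apply/andP; split.
    rewrite -Hsum; apply: ler_sum => i Hi.
    rewrite -[leRHS]mulr1 ler_wpM2l //; first exact: ltW (Hpos i Hi).
    by rewrite /si ge_min lexx.
  apply: (@le_trans _ _ (\sum_(l' | enabled G l l' x)
      aeval x (prob G l l') * (1 - vv G K (l', x) + dl))).
    apply: ler_sum => i Hi; rewrite ler_wpM2l //; first exact: ltW (Hpos i Hi).
    by rewrite /si ge_min lexx orbT.
  have -> : \sum_(l' | enabled G l l' x) aeval x (prob G l l') * (1 - vv G K (l', x) + dl)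
     = (1 + dl) * \sum_(l' | enabled G l l' x) aeval x (prob G l l')
       - \sum_(l' | enabled G l l' x) aeval x (prob G l l') * vv G K (l', x).
    rewrite mulr_sumr -sumrB; apply: eq_bigr => i _; ring.
  rewrite Hsum -E; lra.
Qed.

Lemma uu_descent (R : realType) {G} (wf : wf_CFG G) K dl : 0 < dl ->
  forall s, ~ (1 <= (ratr (si G K dl s) : R)) -> s <> sigma_bot G ->
  match kind G s.1 with
  | LProb => (ratr (dl / K.+2%:R) : R) <
      \sum_(l' | enabled G s.1 l' s.2 && (uu G K dl (l', s.2) < uu G K dl s)%N)
         ratr (aeval s.2 (prob G s.1 l'))
  | _ => forall s', succ G s s' -> (uu G K dl s' < uu G K dl s)%N
  end.
Proof.
move=> Hd [l x] Hsi Hnb.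
have Hsi' : si G K dl (l, x) < 1.
  rewrite ltNge; apply/negP => H; apply: Hsi.
  by rewrite -(rmorph1 (ratr : rat -> R)) ler_rat.
have Hnb' : (l, x) != sigma_bot G by apply/eqP.
have [j [Hu HjK Hj]] := uu_pos wf K dl (l, x) Hd Hnb' Hsi'.
have E := vvS G j (l, x); rewrite (negbTE Hnb') in E.
have Htt := tt_lt K dl j Hd.
rewrite Hu; case Hk: (kind G (l, x).1); rewrite Hk in E.
- move=> s' /existsP [l' /andP [He /eqP ->]].
  have [l0 [Hen Hun HE]] := assign_sum wf l x Hk.
  rewrite HE in E; rewrite ltnS; apply: uu_small; first exact: ltnW.
  have := Hun l' He => /= ->; rewrite -E; exact: lt_trans Htt Hj.
- move=> s' /existsP [l' /andP [He /eqP ->]].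
  rewrite ltnS; apply: uu_small; first exact: ltnW.
  have := @bigmin_le_cond _ _ _ 1 l' (fun l0 => enabled G l l0 x)
     (fun l0 => vv G j (l0, post G l x)) He.
  rewrite -E => H1; apply: lt_trans Htt _; exact: lt_le_trans Hj H1.
- have [_ _ Hp] := wf; have [Hpos Hsum] := Hp l x Hk.
  change (post G (l, x).1 (l, x).2) with (post G l x) in E.
  rewrite post_nonassign ?Hk // in E.
  rewrite -rmorph_sum ltr_rat /=.
  pose good := fun l' => tt K dl j < vv G j (l', x).
  have H1 : \sum_(l' | enabled G l l' x) (if good l' then aeval x (prob G l l') else 0)
      <= \sum_(l' | enabled G l l' x && (uu G K dl (l', x) < j.+1)%N) aeval x (prob G l l').
    rewrite [leRHS]big_mkcondr; apply: ler_sum => i Hi.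
    case Hg: (good i).
      by rewrite ltnS uu_small //; exact: ltnW.
    by case: ifP => _ //; exact: ltW (Hpos i Hi).
  have H2 : vv G j.+1 (l, x) <=
      \sum_(l' | enabled G l l' x) ((if good l' then aeval x (prob G l l') else 0)
                                   + aeval x (prob G l l') * tt K dl j).
    rewrite E; apply: ler_sum => i Hi.
    have Hp0 := Hpos i Hi; have Hv1 := vv_le1 wf j (i, x).
    have Ht0 := tt_ge0 K dl j Hd.
    rewrite /good; case: ifP => Hg.
      nra.
    move/negbT: Hg; rewrite -leNgt => Hg; nra.
  have H5 : \sum_(l' | enabled G l l' x) ((if good l' then aeval x (prob G l l') else 0)
                                   + aeval x (prob G l l') * tt K dl j)
     = \sum_(l' | enabled G l l' x) (if good l' then aeval x (prob G l l') else 0)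
       + tt K dl j.
    by rewrite big_split /= -mulr_suml Hsum mul1r.
  rewrite H5 in H2.
  have H4 := ttS K dl j.
  have H3 : dl / K.+2%:R < dl / K.+1%:R.
    rewrite ltr_pM2l // ltf_pV2 ?posrE ?ltr0Sn // ltr_nat //.
  move: H1 H2 H3 H4 Hj.
  set a := dl / K.+1%:R; set b := dl / K.+2%:R.
  set S1 := \sum_(l' | enabled G l l' x) _.
  set S2 := \sum_(l' | enabled G l l' x && _) _.
  move=> H1 H2 H3 H4 Hj.
  lra.
Qed.

(* limit values and the scheduler                                       *)

Definition Vinf (R : realType) G (s : state G) : R :=
  sup (range (fun j => (ratr (vv G j s) : R))).

Lemma ratr_ge0 (R : realType) (a : rat) : 0 <= a -> 0 <= (ratr a : R).
Proof. by move=> Ha; rewrite -(rmorph0 (ratr : rat -> R)) ler_rat. Qed.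

Lemma Vinf_hs (R : realType) {G} (wf : wf_CFG G) s :
  has_sup (range (fun j => (ratr (vv G j s) : R))).
Proof.
split; first by exists (ratr (vv G 0 s)), 0%N.
exists 1 => y /= [j _ <-].
by rewrite -(rmorph1 (ratr : rat -> R)) ler_rat; exact: vv_le1.
Qed.

Lemma Vinf_ub (R : realType) {G} (wf : wf_CFG G) j s :
  (ratr (vv G j s) : R) <= Vinf R G s.
Proof. by apply: (sup_upper_bound (Vinf_hs R wf s)); exists j. Qed.

Lemma Vinf_adh (R : realType) {G} (wf : wf_CFG G) s (e : R) : 0 < e ->
  exists j, Vinf R G s - e < ratr (vv G j s).
Proof.
move=> He; have [r [j _ <-] H] := sup_adherent He (Vinf_hs R wf s).
by exists j.
Qed.

Lemma Vinf_le (R : realType) {G} (s : state G) (b : R) :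
  (forall j, (ratr (vv G j s) : R) <= b) -> Vinf R G s <= b.
Proof.
move=> H; apply: ge_sup; first by exists (ratr (vv G 0 s)), 0%N.
by move=> y [j _ <-].
Qed.

Lemma Vinf_le1 (R : realType) {G} (wf : wf_CFG G) s : Vinf R G s <= 1.
Proof.
apply: Vinf_le => j.
by rewrite -(rmorph1 (ratr : rat -> R)) ler_rat; exact: vv_le1.
Qed.

Lemma Vinf_nondet (R : realType) {G} (wf : wf_CFG G) (l : 'I_(nL G)) x :
  kind G l = LNondet -> (l, x) != sigma_bot G ->
  exists l', enabled G l l' x /\ Vinf R G (l', post G l x) <= Vinf R G (l, x).
Proof.
move=> Hk Hnb.
case: (pselect (exists l', enabled G l l' x /\
   Vinf R G (l', post G l x) <= Vinf R G (l, x))) => // Hn.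
exfalso.
have H1 : forall l', exists j, enabled G l l' x ->
    Vinf R G (l, x) < ratr (vv G j (l', post G l x)).
  move=> l'; case He: (enabled G l l' x); last by exists 0%N.
  have Hlt : Vinf R G (l, x) < Vinf R G (l', post G l x).
    by rewrite ltNge; apply/negP => Hle; apply: Hn; exists l'.
  have Hpos : 0 < Vinf R G (l', post G l x) - Vinf R G (l, x) by rewrite subr_gt0.
  have [j Hj] := Vinf_adh R wf (l', post G l x) _ Hpos.
  by exists j => _; move: Hj; rewrite opprB addrCA subrr addr0.
have [f Hf] := choice H1.
pose J := \max_(l' : 'I_(nL G)) f l'.
have HJ : forall l', enabled G l l' x -> Vinf R G (l, x) < ratr (vv G J (l', post G l x)).
  move=> l' He; apply: lt_le_trans (Hf l' He) _; rewrite ler_rat.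
  by apply: (vv_leq wf); exact: (@leq_bigmax _ f l').
have [s' /existsP [l0 /andP [He0 _]]] := (let: And3 _ h _ := wf in h) (l, x).
have H1lt : Vinf R G (l, x) < 1.
  apply: lt_le_trans (HJ l0 He0) _.
  by rewrite -(rmorph1 (ratr : rat -> R)) ler_rat; exact: vv_le1.
have Hbig : Vinf R G (l, x) <
    ratr (\big[Num.min/1]_(l' | enabled G l l' x) vv G J (l', post G l x)).
  apply: (big_ind (fun y : rat => Vinf R G (l, x) < ratr y)).
  - by rewrite rmorph1.
  - by move=> a b Ha Hb; rewrite minElt; case: ifP.
  - by move=> i Hi; exact: HJ.
have := Vinf_ub R wf J.+1 (l, x).
rewrite vvS (negbTE Hnb) /= Hk => H2.
have := lt_le_trans Hbig H2; by rewrite ltxx.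
Qed.

Lemma Vinf_assign (R : realType) {G} (wf : wf_CFG G) (l : 'I_(nL G)) x l0 :
  kind G l = LAssign -> (l, x) != sigma_bot G -> enabled G l l0 x ->
  Vinf R G (l0, post G l x) <= Vinf R G (l, x).
Proof.
move=> Hk Hnb He; apply: Vinf_le => j.
have [l1 [Hen Hun HE]] := assign_sum wf l x Hk.
have := Vinf_ub R wf j.+1 (l, x).
by rewrite vvS (negbTE Hnb) /= Hk HE (Hun l0 He).
Qed.

Lemma Vinf_prob (R : realType) {G} (wf : wf_CFG G) (l : 'I_(nL G)) x :
  kind G l = LProb -> (l, x) != sigma_bot G ->
  \sum_(l' | enabled G l l' x) (ratr (aeval x (prob G l l')) : R) * Vinf R G (l', x)
    <= Vinf R G (l, x).
Proof.
move=> Hk Hnb.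
have [_ _ Hp] := wf; have [Hpos Hsum] := Hp l x Hk.
set c := \sum_(l' | _) _.
rewrite leNgt; apply/negP => Hc.
pose g := (c - Vinf R G (l, x)) / 2.
have Hg : 0 < g by rewrite /g divr_gt0 // subr_gt0.
have H1 : forall l', exists j, Vinf R G (l', x) - g < ratr (vv G j (l', x)).
  by move=> l'; exact: Vinf_adh.
have [f Hf] := choice H1.
pose J := \max_(l' : 'I_(nL G)) f l'.
have HJ : forall l', Vinf R G (l', x) - g <= ratr (vv G J (l', x)).
  move=> l'; apply: ltW; apply: lt_le_trans (Hf l') _; rewrite ler_rat.
  by apply: (vv_leq wf); exact: (@leq_bigmax _ f l').
have E : (ratr (vv G J.+1 (l, x)) : R) =
    \sum_(l' | enabled G l l' x) ratr (aeval x (prob G l l')) * ratr (vv G J (l', x)).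
  rewrite ratr_sumM vvS (negbTE Hnb) /= Hk post_nonassign ?Hk //.
have Hs1 : \sum_(l' | enabled G l l' x) (ratr (aeval x (prob G l l')) : R) = 1.
  by rewrite -rmorph_sum Hsum rmorph1.
have H2 : c - g <= ratr (vv G J.+1 (l, x)).
  rewrite E.
  have -> : c - g = \sum_(l' | enabled G l l' x)
      (ratr (aeval x (prob G l l')) : R) * (Vinf R G (l', x) - g).
    rewrite /c -[in LHS](mulr1 g) -Hs1 mulr_sumr -sumrB.
    by apply: eq_bigr => i _; ring.
  apply: ler_sum => i Hi; apply: ler_wpM2l; last exact: HJ.
  exact: ratr_ge0 (ltW (Hpos i Hi)).
have := Vinf_ub R wf J.+1 (l, x).
move: H2 Hc; rewrite /g; lra.
Qed.

Lemma sched_ex (R : realType) {G} (wf : wf_CFG G) :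
  exists sch : scheduler G, valid_sched G sch /\
    forall h s, kind G s.1 = LNondet -> s != sigma_bot G ->
      Vinf R G (sch h s) <= Vinf R G s.
Proof.
have H : forall s : state G, exists s',
    (kind G s.1 = LNondet -> succ G s s') /\
    (kind G s.1 = LNondet -> s != sigma_bot G -> Vinf R G s' <= Vinf R G s).
  move=> [l x] /=.
  case Hk: (kind G l); try by exists (l, x).
  case Hb: ((l, x) == sigma_bot G).
    have [_ Hs _] := wf; have [s' Hs'] := Hs (l, x).
    by exists s'; split => // _; rewrite Hb.
  have [l' [He HV]] := Vinf_nondet R wf l x Hk (negbT Hb).
  exists (l', post G l x); split => // _.
  by apply/existsP; exists l'; rewrite He eqxx.
have [f Hf] := choice H.
exists (fun _ s => f s); split.
  by move=> h s Hk; exact: (Hf s).1 Hk.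
by move=> h s Hk Hnb; exact: (Hf s).2 Hk Hnb.
Qed.

Lemma reach0 (R : realType) G sch h (s : state G) :
  reachk R G sch 0 h s = if s == sigma_bot G then 1 else 0.
Proof. by []. Qed.

Lemma reachS (R : realType) G sch k h (s : state G) :
  reachk R G sch k.+1 h s = if s == sigma_bot G then 1 else
  match kind G s.1 with
  | LNondet => reachk R G sch k (rcons h s) (sch h s)
  | LAssign => \sum_(l' | enabled G s.1 l' s.2)
                 reachk R G sch k (rcons h s) (l', post G s.1 s.2)
  | LProb => \sum_(l' | enabled G s.1 l' s.2)
               ratr (aeval s.2 (prob G s.1 l')) *
               reachk R G sch k (rcons h s) (l', s.2)
  end.
Proof. by []. Qed.

Lemma Vinf_bot (R : realType) {G} (wf : wf_CFG G) : 1 <= Vinf R G (sigma_bot G).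
Proof. by have := Vinf_ub R wf 0 (sigma_bot G); rewrite vv0 eqxx rmorph1. Qed.

Lemma Vinf_ge0 (R : realType) {G} (wf : wf_CFG G) s : 0 <= Vinf R G s.
Proof.
apply: le_trans (Vinf_ub R wf 0 s); apply: ratr_ge0; exact: vv_ge0.
Qed.

Lemma reach_le (R : realType) {G} (wf : wf_CFG G) (sch : scheduler G) :
  (forall h s, kind G s.1 = LNondet -> s != sigma_bot G ->
      Vinf R G (sch h s) <= Vinf R G s) ->
  forall k h s, reachk R G sch k h s <= Vinf R G s.
Proof.
move=> Hsch; elim=> [|k IH] h [l x].
  rewrite reach0; case: ifP => Hb; last exact: Vinf_ge0.
  by move/eqP: Hb => ->; exact: Vinf_bot.
rewrite reachS; case: ifP => Hb.
  by move/eqP: Hb => ->; exact: Vinf_bot.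
case Hk: (kind G (l, x).1).
- have [l0 [Hen Hun HE]] := assign_sum wf l x Hk; rewrite HE.
  apply: le_trans (IH _ _) _; exact: (Vinf_assign R wf l x l0 Hk (negbT Hb) Hen).
- apply: le_trans (IH _ _) _; exact: (Hsch h (l, x) Hk (negbT Hb)).
- apply: le_trans (Vinf_prob R wf l x Hk (negbT Hb)).
  have [_ _ Hp] := wf; have [Hpos Hsum] := Hp l x Hk.
  apply: ler_sum => i Hi; apply: ler_wpM2l; last exact: IH.
  exact: ratr_ge0 (ltW (Hpos i Hi)).
Qed.

Lemma Pr_visit_ge0 (R : realType) G (sch : scheduler G) : 0 <= Pr_visit R G sch.
Proof.
rewrite /Pr_visit.
case: (pselect (has_sup (range (fun k => reachk R G sch k [::] (sigma_init G))))) => Hs.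
  apply: le_trans (_ : 0 <= reachk R G sch 0 [::] (sigma_init G)) _.
    by rewrite reach0; case: ifP.
  by apply: (sup_upper_bound Hs); exists 0%N.
by rewrite sup_out.
Qed.

Lemma Prterm_le (R : realType) {G} (wf : wf_CFG G) :
  Pr_term R G <= Vinf R G (sigma_init G).
Proof.
have [sch [Hv Hsch]] := sched_ex R wf.
apply: (@le_trans _ _ (Pr_visit R G sch)).
  rewrite /Pr_term; apply: ge_inf; last by exists sch.
  by exists 0 => y [sch' _ <-]; exact: Pr_visit_ge0.
rewrite /Pr_visit; apply: ge_sup.
  by exists (reachk R G sch 0 [::] (sigma_init G)), 0%N.
by move=> y [k _ <-]; exact: reach_le.
Qed.

(* definability at the level of states                                  *)

Lemma see_0 G (s : state G) q : state_env_ext s q 0%N = (val s.1)%:R.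
Proof. by rewrite /state_env_ext upd_other. Qed.

Lemma see_q G (s : state G) q : state_env_ext s q (nV G).+1 = q.
Proof. by rewrite /state_env_ext upd_same. Qed.

Lemma see_x G (s : state G) q :
  xof (fun i : 'I_(nV G) => (val i).+1) (state_env_ext s q) = s.2.
Proof.
apply/ffunP => i; rewrite ffunE /state_env_ext upd_other; last first.
  by rewrite eqSS neq_ltn ltn_ord.
rewrite /state_env; case: insubP => [j _ Hj|]; last by rewrite ltn_ord.
by rewrite (val_inj Hj).
Qed.

Lemma loc_eq G (l l' : 'I_(nL G)) : ((val l)%:R = (val l')%:R :> rat) -> l = l'.
Proof. by move/eqP; rewrite eqr_nat => /eqP /val_inj. Qed.

Lemma def_state_le G (F : state G -> rat) :
  (forall l, DefF (fun x => F (l, x))) ->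
  exists f, forall s q, holds (state_env_ext s q) f <-> q <= F s.
Proof.
move=> HF.
pose ix0 := fun i : 'I_(nV G) => (val i).+1.
have Hix : forall i, (ix0 i < (nV G).+2)%N by move=> i; rewrite /ix0 !ltnS; exact: ltnW (ltn_ord i).
have K : forall l : 'I_(nL G), FO (fun env => env 0%N = (val l)%:R /\
                                   env (nV G).+1 <= F (l, xof ix0 env)).
  move=> l; exact: (FO_and (FO_var_const _ 0) (FO_le_F (HF l) ix0 (nV G).+1 (nV G).+2 Hix (ltnSn _))).
have [f Hf] := FO_exists_fin K.
exists f => s q; split.
  move/Hf => [l []]; rewrite see_0 see_q see_x => /loc_eq <-.
  by case: s.
move=> H; apply/Hf; exists s.1; rewrite see_0 see_q see_x; split => //.
by case: s H.
Qed.

Lemma def_state_eq G (F : state G -> rat) :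
  (forall l, DefF (fun x => F (l, x))) ->
  exists f, forall s q, holds (state_env_ext s q) f <-> q = F s.
Proof.
move=> HF.
pose ix0 := fun i : 'I_(nV G) => (val i).+1.
have Hix : forall i, (ix0 i < (nV G).+2)%N by move=> i; rewrite /ix0 !ltnS; exact: ltnW (ltn_ord i).
have K : forall l : 'I_(nL G), FO (fun env => env 0%N = (val l)%:R /\
                                   env (nV G).+1 = F (l, xof ix0 env)).
  move=> l; exact: (FO_and (FO_var_const _ 0) (HF l ix0 (nV G).+1 (nV G).+2 Hix (ltnSn _))).
have [f Hf] := FO_exists_fin K.
exists f => s q; split.
  move/Hf => [l []]; rewrite see_0 see_q see_x => /loc_eq <-.
  by case: s.
move=> H; apply/Hf; exists s.1; rewrite see_0 see_q see_x; split => //.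
by case: s H.
Qed.

Lemma DefF_si G K dl (l : 'I_(nL G)) : DefF (fun x => si G K dl (l, x)).
Proof.
exact: (DefF_min (DefF_one _) (DefF_add (DefF_add (DefF_one _)
          (DefF_neg (DefF_vv G K l))) (DefF_const _ dl))).
Qed.

Lemma DefF_uu G K dl (l : 'I_(nL G)) : DefF (fun x => (uu G K dl (l, x))%:R).
Proof.
apply: (DefF_ext (DefF_ite (DefB_or (DefB_bot G l) (DefB_le (DefF_one _) (DefF_si G K dl l)))
   (DefF_zero _)
   (DefF_find (iota 0 K.+1) (fun j x => tt K dl j < vv G j (l, x))
      (fun j => DefB_lt (DefF_const _ (tt K dl j)) (DefF_vv G j l))))).
by move=> x; rewrite /uu; case: ifP.
Qed.

Theorem mainTheorem9 (R : realType) (G : CFG) (p : R) :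
  wf_CFG G -> 0 < p -> p < 1 -> 1 - p <= Pr_term R G ->
  forall n : nat, (1 <= n)%N ->
  exists (Inv : set (state G)) (SI : state G -> R) (eps : R)
         (U : state G -> nat) (H : nat),
    [/\ definable_set Inv, definable_rfun Inv SI, definable_real eps
      & definable_nfun Inv U] /\
    [/\ Inv (sigma_init G), inductive_invariant Inv,
        SI (sigma_init G) <= p + n%:R^-1,
        (forall s, Inv s -> 0 <= SI s) & supermartingale Inv SI] /\
    0 < eps /\
    (forall s, Inv s -> (U s <= H)%N) /\
    (forall s, Inv s -> (1 <= SI s \/ s = sigma_bot G) -> U s = 0%N) /\
    (forall s, Inv s -> ~ (1 <= SI s) -> s <> sigma_bot G ->
       match kind G s.1 with
       | LProb =>
           eps < \sum_(l' | enabled G s.1 l' s.2 &&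
                            (U (l', s.2) < U s)%N)
                   ratr (aeval s.2 (prob G s.1 l'))
       | _ => forall s', succ G s s' -> (U s' < U s)%N
       end).
Proof.
move=> wf Hp0 Hp1 Hterm n Hn.
pose dl : rat := (n%:R)^-1 / 2.
have Hdl : 0 < dl by rewrite /dl divr_gt0 // invr_gt0 ltr0n.
have HdlR : (ratr dl : R) = (n%:R)^-1 / 2.
  by rewrite /dl fmorph_div fmorphV !rmorph_nat.
have HdlR' : 0 < (ratr dl : R) by rewrite ltr0q.
have [K HK] := Vinf_adh R wf (sigma_init G) _ HdlR'.
have HV := Prterm_le R wf.
exists setT, (fun s => ratr (si G K dl s)), (ratr (dl / K.+2%:R)), (uu G K dl), K.+1.
refine (conj (And4 _ _ _ _) (conj (And5 _ _ _ _ _) (conj _ (conj _ (conj _ _))))).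
- by exists (FEq (TVar 0) (TVar 0)).
- have [f Hf] := @def_state_le G _ (fun l => DefF_si G K dl l).
  exists f => s q; split.
    by move/Hf => H; split => //; rewrite ler_rat.
  by case=> _; rewrite ler_rat => /Hf.
- have := @FO_le_F 0 _ (DefF_const 0 (dl / K.+2%:R)) (fun _ => 0%N) 0 1
            (fun _ => ltn0Sn 0) (ltn0Sn 0).
  case=> f Hf; exists f => q; split.
    by move/Hf; rewrite upd_same ler_rat.
  by rewrite ler_rat => H; apply/Hf; rewrite upd_same.
- have [f Hf] := @def_state_eq G (fun s => (uu G K dl s)%:R) (fun l => DefF_uu G K dl l).
  exists f => s q; split.
    by move/Hf => H; split.
  by case=> _ /Hf.
- by [].
- by [].
- have Hle : si G K dl (sigma_init G) <= 1 - vv G K (sigma_init G) + dl.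
    by rewrite /si ge_min lexx orbT.
  rewrite -(ler_rat R) rmorphD rmorphB rmorph1 in Hle.
  apply: (le_trans Hle); move: HK HV Hterm Hle; rewrite HdlR.
  set a := ratr (vv G K (sigma_init G)); set V := Vinf R G (sigma_init G).
  move=> HK HV Hterm Hle.
  have : n%:R^-1 / 2 + n%:R^-1 / 2 = (n%:R^-1 : R) by rewrite -splitr.
  lra.
- by move=> s _; apply: ratr_ge0; exact: si_ge0.
- exact: si_super.
- by rewrite ltr0q divr_gt0 // ltr0Sn.
- by move=> s _; exact: uu_le.
- move=> s _ [H|H]; apply: uu_zero; last by right.
  by left; rewrite -(ler_rat R) rmorph1.
- by move=> s _; exact: uu_descent.
Qed.
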